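(* Let $(K,C,S)$ be the associated layered complex of a divided complex $(K,S^0)$, and let $(K,C,S)\searrow(K-\{f,p\},C,S)$ be an elementary intermediate collapse of a principal simplex $p\in\mathrm{IM}(K,C,S)$ using the free face $f$. Then the freely orthogonal deformation retraction $H:|K|\times I\to|K|$ associated to $p$ and $f$ satisfies $H_t(|K|-|S|)\subseteq|K|-|S|$ and $H_t(|S|)\subseteq|S|$ for all $t\in I$.
   Context: A simplicial complex is a set of finite nonempty sets (simplices) closed under passing to nonempty subsets (faces); $K^0$ is its vertex set; $t<s$ means proper face; $|K|$ is the geometric realization and $|s|$ the closed geometric simplex. A simplex is principal in $K$ if it is not a proper face of any simplex of $K$; $f$ is free in $K$ if it is a proper face of a principal simplex $p$ and of no other simplex of $K$. A layered simplicial complex is $(K,C,S)$ with $C,S$ disjoint subcomplexes; $\mathrm{IM}(K,C,S)$ are the simplices in neither $C$ nor $S$. A divided complex is $(K,S^0)$, $S^0\subseteq K^0$; its associated layered complex has $S$ = simplices with all vertices in $S^0$, $C$ = simplices with all vertices in $K^0-S^0$. An elementary intermediate collapse removes $f,p$ where (i) $p\in\mathrm{IM}(K,C,S)$, (ii) $p$ is principal in $K$, (iii) $f$ is a face of $p$ free in $K$, (iv) every $t\in S$ with $t<p$ satisfies $t<f$. Freely orthogonal deformation retraction: with $v$ the vertex of $p$ not in $f$ and $f_1,\dots,f_m$ the vertices of $f$ ($m\ge1$), identify $|p|$ with $\{x\in\mathbb R^m:x_i\ge0,\sum x_i\le1\}$ ($v\mapsto0$, $f_i\mapsto e_i$); set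 $r(x)=(x_1-x_j,\dots,x_m-x_j)$ with $x_j=\min_i x_i$, and $H(x,t)=(1-t)x+t\,r(x)$ for $x\in|p|$, $H(x,t)=x$ for $x\in|K|-|p|$; $H_t=H(\cdot,t)$. *)

(* Defs.v *)
From HB Require Import structures.
From mathcomp Require Import all_boot all_order all_algebra.
From mathcomp Require Import boolp reals.
Set Implicit Arguments. Unset Strict Implicit. Unset Printing Implicit Defensive.
Import Order.TTheory GRing.Theory Num.Theory.
Local Open Scope ring_scope.

Section Defs.
Variable V : finType.

Definition is_complex (K : {set {set V}}) : Prop :=
  set0 \notin K /\
  forall s t : {set V}, s \in K -> t \subset s -> t != set0 -> t \in K.

Definition subcomplex (L K : {set {set V}}) : Prop :=
  is_complex L /\ L \subset K.

Definition principal (K : {set {set V}}) (p : {set V}) : bool :=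
  (p \in K) && [forall s in K, ~~ (p \proper s)].

Definition free_face (K : {set {set V}}) (f p : {set V}) : bool :=
  [&& principal K p, f \proper p &
      [forall s in K, (f \proper s) ==> (s == p)]].

Definition IM (K C S : {set {set V}}) : {set {set V}} :=
  [set s in K | (s \notin C) && (s \notin S)].

Definition assocS (K : {set {set V}}) (S0 : {set V}) : {set {set V}} :=
  [set s in K | s \subset S0].
Definition assocC (K : {set {set V}}) (S0 : {set V}) : {set {set V}} :=
  [set s in K | s \subset ~: S0].

Definition elem_int_collapse (K C S : {set {set V}}) (f p : {set V}) : Prop :=
  [/\ p \in IM K C S,
      principal K p,
      free_face K f p &
      forall t, t \in S -> t \proper p -> t \proper f].

(* Geometric realization: points are barycentric-coordinate functions
   V -> R.  x lies in the closed geometric simplex |s|. *)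
Definition in_simplex (R : realType) (s : {set V}) (x : V -> R) : Prop :=
  (forall w, 0 <= x w) /\ (forall w, w \notin s -> x w = 0) /\
  \sum_(w : V) x w = 1.

Definition in_real (R : realType) (L : {set {set V}}) (x : V -> R) : Prop :=
  exists2 s, s \in L & in_simplex s x.

(* On |p|, in coordinates (x_1,..,x_m) = barycentric coordinates at the
   vertices of f (v |-> 0), H(x,t) = (1-t)x + t r(x) with
   r(x) = (x_i - min_j x_j)_i.  In barycentric coordinates: the coordinate
   at a vertex of f decreases by t*min, that at the remaining vertex v of p
   increases by t*m*min (so that coordinates still sum to 1).
   The min is taken over the (nonempty) set f; the seed 1 of the big min is
   harmless since barycentric coordinates are <= 1.
   Outside |p|, H(x,t) = x. *)
Definition fmin (R : realType) (f : {set V}) (x : V -> R) : R :=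
  \big[Num.min/1]_(w in f) x w.

Definition H (R : realType) (f p : {set V}) (x : V -> R) (t : R) : V -> R :=
  fun w =>
    if `[< in_simplex p x >] then
      if w \in f then x w - t * fmin f x
      else if w \in p then x w + t * #|f|%:R * fmin f x
      else x w
    else x w.

End Defs.

(* Main.v *)
Require Import Defs.
From HB Require Import structures.
From mathcomp Require Import all_boot all_order all_algebra.
From mathcomp Require Import boolp reals.
Import Order.TTheory GRing.Theory Num.Theory.
Local Open Scope ring_scope.

Section Comb.
Variables (V : finType) (K : {set {set V}}) (S0 f p : {set V}).
Hypothesis HK : is_complex K.
Hypothesis HC : elem_int_collapse K (assocC K S0) (assocS K S0) f p.

Lemma factA v : v \in p -> v \notin f -> v \notin S0.
Proof.
case: HC => pIM _ _ Hiv vp vf; apply/negP => vS.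
case: HK => _ Hcl.
have pK : p \in K by move: pIM; rewrite inE => /andP[].
have pnS : ~~ (p \subset S0).
  by move: pIM; rewrite !inE pK /= => /andP[_]. 
set u := p :&: S0.
have uK : u \in K.
  apply: (Hcl p) => //; first exact: subsetIl.
  by apply/set0Pn; exists v; rewrite inE vp vS.
have uS : u \in assocS K S0 by rewrite inE uK subsetIr.
have up : u \proper p.
  rewrite properEneq subsetIl andbT; apply/eqP => e.
  by move: pnS; rewrite -e subsetIr.
have := Hiv u uS up => /proper_sub /subsetP /(_ v).
by rewrite inE vp vS (negbTE vf) => /(_ isT).
Qed.

Lemma fne0 : f != set0.
Proof.
case: HC => pIM _ /and3P[_ fp _] _.
apply/negP => /eqP f0.
move: pIM; rewrite !inE => /and3P[pK /negP pC _]; apply: pC.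
rewrite pK /=; apply/subsetP => w wp; rewrite inE.
by apply: factA => //; rewrite f0 inE.
Qed.

Lemma factB : exists2 w, w \in f & w \notin S0.
Proof.
case: HC => pIM _ /and3P[_ fp _] Hiv.
case: HK => _ Hcl.
have pK : p \in K by move: pIM; rewrite inE => /andP[].
case: (boolP (f \subset S0)) => [fS|/subsetPn [w wf wS]]; last by exists w.
have fK : f \in K by apply: (Hcl p) => //; [exact: proper_sub | exact: fne0].
have := Hiv f; rewrite inE fK fS => /(_ isT fp).
by rewrite properE subxx.
Qed.

Lemma factV : exists v, [/\ v \in p, v \notin f & forall w, w \in p -> w \notin f -> w = v].
Proof.
case: HC => pIM _ /and3P[_ fp /forallP fr] _.
case: HK => _ Hcl.
have pK : p \in K by move: pIM; rewrite inE => /andP[].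
have [v] : exists v, v \in p :\: f.
  by move: fp; rewrite properE -[p \subset f]setD_eq0 => /andP[_ Hn]; exact/set0Pn.
rewrite inE => /andP[vf vp]; exists v; split => // w wp wf.
apply/eqP; apply/negPn/negP => wv.
have sK : v |: f \in K.
  apply: (Hcl p) => //; last by apply/set0Pn; exists v; rewrite !inE eqxx.
  by apply/subsetP => y; rewrite !inE => /orP[/eqP->|] //; apply/subsetP/proper_sub.
have := fr (v |: f); rewrite sK /= => /implyP; rewrite properUr ?sub1set //.
move=> /(_ isT) /eqP e.
by move: wp; rewrite -e !inE (negbTE wv) (negbTE wf).
Qed.
End Comb.
Section An.
Variables (V : finType) (R : realType) (f p : {set V}).

Lemma fmin_le (x : V -> R) w : w \in f -> fmin f x <= x w.
Proof. move=> wf; exact: bigmin_le_cond. Qed.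

Lemma fmin_ge0 (x : V -> R) : (forall w, 0 <= x w) -> 0 <= fmin f x.
Proof. move=> h; apply: le_bigmin => //. Qed.

Lemma H_id (x : V -> R) t : (~ in_simplex p x \/ t * fmin f x = 0) -> H f p x t = x.
Proof.
move=> h; apply/funext => w; rewrite /H.
case: (pselect (in_simplex p x)) => hx.
  have -> : `[< in_simplex p x >] = true by apply/asboolP.
  case: h => [//|h].
  have e : t * #|f|%:R * fmin f x = 0 by rewrite mulrAC h mul0r.
  by rewrite h e subr0 addr0; case: ifP => //; case: ifP.
by have -> : `[< in_simplex p x >] = false by apply/asboolPn.
Qed.

Lemma sum_ind (A : {set V}) : \sum_(w : V) ((w \in A)%:R : R) = #|A|%:R.
Proof.
rewrite (bigID (fun w => w \in A)) /= [X in _ + X]big1 ?addr0; last by move=> w /negbTE ->.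
by rewrite (eq_bigr (fun=> 1)) ?sumr_const // => w ->.
Qed.

Lemma H_simplex (x : V -> R) (t : R) v : 0 <= t <= 1 -> f \subset p ->
  v \in p -> v \notin f -> (forall w, w \in p -> w \notin f -> w = v) ->
  in_simplex p x -> in_simplex p (H f p x t).
Proof.
move=> /andP[t0 t1] fp vp vf hv hx.
have hb : `[< in_simplex p x >] = true by apply/asboolP.
have [x0 [xp xs]] := hx.
have m0 := @fmin_ge0 x x0.
have eH : forall w, H f p x t w = x w - (w \in f)%:R * (t * fmin f x)
                         + (w == v)%:R * (t * #|f|%:R * fmin f x).
  move=> w; rewrite /H hb.
  case: (boolP (w \in f)) => wf.
    have -> : (w == v) = false by apply/negbTE; apply: contraNneq vf => <-.
    by rewrite mul1r mul0r addr0.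
  case: (boolP (w \in p)) => wp.
    by rewrite (hv _ wp wf) eqxx mul0r subr0 mul1r.
  have -> : (w == v) = false by apply/negbTE; apply: contraNneq wp => ->.
  by rewrite !mul0r subr0 addr0.
split; [|split].
- move=> w; rewrite eH.
  case: (boolP (w \in f)) => wf.
    have -> : (w == v) = false by apply/negbTE; apply: contraNneq vf => <-.
    rewrite mul1r mul0r addr0 subr_ge0.
    have h := @fmin_le x w wf; rewrite (le_trans _ h) //.
    by rewrite -{2}[fmin f x]mul1r ler_wpM2r.
  rewrite mul0r subr0; apply: addr_ge0 => //.
  by rewrite !mulr_ge0 ?ler0n.
- move=> w wp; rewrite eH.
  have wf : w \notin f by apply: contra wp; apply/subsetP.
  have -> : (w == v) = false by apply/negbTE; apply: contraNneq wp => ->.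
  by rewrite (negbTE wf) !mul0r subr0 addr0 xp.
- under eq_bigr do rewrite eH.
  rewrite big_split sumrB /= xs -!mulr_suml sum_ind.
  under eq_bigr do rewrite -in_set1.
  by rewrite sum_ind cards1 mul1r mulrCA mulrA subrK.
Qed.
End An.

Theorem lemma5p5 (V : finType) (R : realType) (K : {set {set V}})
  (S0 : {set V}) (f p : {set V}) :
  is_complex K ->
  elem_int_collapse K (assocC K S0) (assocS K S0) f p ->
  forall t : R, 0 <= t <= 1 ->
    (forall x : V -> R, in_real K x -> ~ in_real (assocS K S0) x ->
       in_real K (H f p x t) /\ ~ in_real (assocS K S0) (H f p x t)) /\
    (forall x : V -> R, in_real (assocS K S0) x ->
       in_real (assocS K S0) (H f p x t)).
Proof.
move=> HK HC t ht.
have [v [vp vf hv]] := @factV _ _ _ _ _ HK HC.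
have hA := @factA _ _ _ _ _ HK HC.
have [w0 w0f w0S] := @factB _ _ _ _ _ HK HC.
have f0 := @fne0 _ _ _ _ _ HK HC.
case: (HC) => pIM _ /and3P[_ fpp _] _.
have fp : f \subset p := proper_sub fpp.
have pK : p \in K by move: pIM; rewrite inE => /andP[].
have [t0 t1] := andP ht.
split.
- move=> x xK xnS.
  case: (pselect (in_simplex p x)) => hx; last by rewrite H_id; [split|left].
  case: (eqVneq (t * fmin f x) 0) => e; first by rewrite H_id; [split|right].
  split; first by exists p => //; exact: (@H_simplex V R f p x t v ht fp vp vf hv hx).
  move=> [s]; rewrite inE => /andP[sK sS] [_ [hs _]].
  have [x0 _] := hx.
  have m0 := @fmin_ge0 _ _ f x x0.
  have tm : 0 < t * fmin f x by rewrite lt_def e mulr_ge0.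
  have Hv : 0 < H f p x t v.
    have hb : `[< in_simplex p x >] = true by apply/asboolP.
    rewrite /H hb (negbTE vf) vp.
    apply: ltr_wpDl => //; rewrite mulrAC mulr_gt0 //.
    by rewrite ltr0n card_gt0.
  have vs : v \in s.
    by apply/negPn/negP => /hs; move: Hv => /[swap] ->; rewrite ltxx.
  by move/negP: (hA v vp vf); apply; apply: (subsetP sS).
- move=> x [s]; rewrite inE => /andP[sK sS] hxs.
  case: (pselect (in_simplex p x)) => hx; last by rewrite H_id; [exists s => //; rewrite inE sK|left].
  case: (eqVneq (t * fmin f x) 0) => e; first by rewrite H_id; [exists s => //; rewrite inE sK|right].
  have [x0 _] := hx.
  have m0 := @fmin_ge0 _ _ f x x0.
  have m1 : fmin f x != 0 by apply: contraNneq e => ->; rewrite mulr0.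
  have mp : 0 < fmin f x by rewrite lt_def m1.
  have xw : 0 < x w0 := lt_le_trans mp (@fmin_le _ _ f x w0 w0f).
  have [_ [hs _]] := hxs.
  have ws : w0 \in s.
    by apply/negPn/negP => /hs; move: xw => /[swap] ->; rewrite ltxx.
  by move/negP: w0S; case; apply: (subsetP sS).
Qed.
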